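(* Let $G$ be a finite simple graph with an edge $e=\{x,y\}\in E(G)$ such that $\deg(x)\le 2$ and $\deg(y)\le 2$. Then $M_2(G)$ is contractible.
   Context: A $2$-matching of a graph $G$ is a set of edges $H\subseteq E(G)$ such that every vertex has degree at most $2$ in $H$. The $2$-matching complex $M_2(G)$ is the simplicial complex whose vertices are the edges of $G$ and whose faces are the $2$-matchings of $G$. *)

(* Defs.v *)
From HB Require Import structures.
From mathcomp Require Import all_boot all_order all_algebra.
From mathcomp Require Import all_classical all_reals topology normedtype.
Import numFieldNormedType.Exports.
Set Implicit Arguments. Unset Strict Implicit. Unset Printing Implicit Defensive.
Import Order.TTheory GRing.Theory Num.Theory.
Local Open Scope ring_scope.

Definition simple_graph (T : finType) (G : rel T) : Prop :=
  symmetric G /\ irreflexive G.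

Definition is_edge (T : finType) (G : rel T) (e : {set T}) : bool :=
  [exists x, exists y, G x y && (e == [set x; y])].

Definition edges (T : finType) (G : rel T) : {set {set T}} :=
  [set e | is_edge G e].

Definition deg (T : finType) (G : rel T) (x : T) : nat := #|[set y | G x y]|.

Definition two_matching (T : finType) (G : rel T) (H : {set {set T}}) : bool :=
  (H \subset edges G) && [forall v, (#|[set f in H | v \in f]| <= 2)%N].

(* The 2-matching complex M_2(G), as the family of its faces (sets of
   vertices, the vertices being the edges of G). *)
Definition M2 (T : finType) (G : rel T) : pred {set {set T}} :=
  fun H => two_matching G H.

(* Standard geometric realization of a (finite abstract) simplicial complex
   K on the finite vertex type V, as a subspace of R^V:
   points are barycentric coordinate vectors whose support is a face. *)
Definition realization (R : realType) (V : finType) (K : pred {set V})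
  : set {ptws V -> R} :=
  (fun t => (forall v, 0 <= t v) /\ \sum_(v : V) t v = 1
           /\ K [set v | t v != 0]).

Definition contractible (R : realType) (X : topologicalType) (A : set X) : Prop :=
  exists x0 : X, A x0 /\
  exists H : R * X -> X,
    {within (fun p : R * X => 0 <= p.1 <= 1 /\ A p.2), continuous H}%classic
    /\ (forall p : R * X, 0 <= p.1 <= 1 -> A p.2 -> A (H p))
    /\ (forall x, A x -> H (0, x) = x /\ H (1, x) = x0).

Definition complex_contractible (R : realType) (V : finType) (K : pred {set V}) : Prop :=
  contractible R (@realization R V K).

(* Main.v *)
Require Import Defs.
From HB Require Import structures.
From mathcomp Require Import all_boot all_order all_algebra.
From mathcomp Require Import all_classical all_reals topology normedtype.
Import numFieldNormedType.Exports.
Set Implicit Arguments. Unset Strict Implicit. Unset Printing Implicit Defensive.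
Import Order.TTheory GRing.Theory Num.Theory.
Local Open Scope ring_scope.
Local Open Scope classical_set_scope.

Lemma ptws_cont (X : topologicalType) (V : choiceType) (R : realType)
  (f : X -> {ptws V -> R}) :
  (forall v, continuous (fun x => f x v)) -> continuous f.
Proof.
move=> hf x.
have H := @pointwise_cvgP (discrete_topology V) R (f @ x) (f x).
have F : Filter (f @ x) by exact: fmap_filter.
apply: (proj2 (H F)) => v.
exact: (hf v x).
Qed.

Lemma proj_cont (V : choiceType) (R : realType) (v : V) :
  continuous (fun g : {ptws V -> R} => g v).
Proof. exact: (@proj_continuous V (fun _ => R) v). Qed.

Lemma comp_cont (V : choiceType) (R : realType) (d : V -> R) (v : V) :
  continuous (fun p : R * {ptws V -> R} => (1 - p.1) * p.2 v + p.1 * d v).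
Proof.
move=> p.
have h2 : continuous (fun p : R * {ptws V -> R} => p.2 v).
  move=> q.
  have A : snd @ q --> q.2 by exact: cvg_snd.
  have B := @proj_cont V R v q.2.
  have C := cvg_comp _ _ A B.
  exact: C.
rewrite /continuous_at.
have Fp : Filter (nbhs p) by exact: nbhs_filter.
have E0 : (fun _ : R * {ptws V -> R} => (1:R)) @ p --> (1:R) by exact: cvg_cst.
have E1 : (fun p0 : R * {ptws V -> R} => p0.1) @ p --> p.1 by exact: cvg_fst.
have E2 : (fun p0 : R * {ptws V -> R} => p0.2 v) @ p --> p.2 v by exact: h2.
have E3 : (fun _ : R * {ptws V -> R} => d v) @ p --> d v by exact: cvg_cst.
have E := cvgD (cvgM (cvgB E0 E1) E2) (cvgM E1 E3).
exact: E.
Qed.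

Definition hom (V : finType) (R : realType) (d : V -> R)
  (p : R * {ptws V -> R}) : {ptws V -> R} :=
  fun v => (1 - p.1) * p.2 v + p.1 * d v.

Local Close Scope classical_set_scope.

Lemma tm_sub (T : finType) (G : rel T) (A B : {set {set T}}) :
  two_matching G A -> B \subset A -> two_matching G B.
Proof.
rewrite /two_matching; move=> /andP[sA /forallP cA] sBA; apply/andP; split.
  exact: (fintype.subset_trans sBA sA).
apply/forallP => v; apply: leq_trans (cA v); apply: subset_leq_card.
apply/fintype.subsetP => f; rewrite !inE => /andP[fB ->]; rewrite andbT.
exact: (fintype.subsetP sBA).
Qed.

Lemma tm0 (T : finType) (G : rel T) : two_matching G finset.set0.
Proof.
rewrite /two_matching; apply/andP; split; first exact: finset.sub0set.
apply/forallP => v.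
have -> : [set f in (finset.set0 : {set {set T}}) | v \in f] = finset.set0.
  by apply/setP => f; rewrite !inE.
by rewrite cards0.
Qed.

Lemma card_inc (T : finType) (G : rel T) (E : {set {set T}}) (v : T) :
  symmetric G -> E \subset edges G ->
  (#|[set f in E | v \in f]| <= deg G v)%N.
Proof.
move=> sym sE; rewrite /deg.
apply: leq_trans (leq_imset_card (fun z => [set v; z]) _).
apply: subset_leq_card; apply/fintype.subsetP => f; rewrite inE => /andP[fE vf].
have := fintype.subsetP sE f fE; rewrite inE => /existsP[a /existsP[b /andP[Gab /eqP fe]]].
move: vf; rewrite fe !inE => /orP[/eqP va|/eqP vb].
  by subst; apply/imsetP; exists b => //; rewrite inE.
subst; apply/imsetP; exists a; first by rewrite inE sym.
by rewrite finset.setUC.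
Qed.

Lemma cone (T : finType) (G : rel T) (x y : T) (A : {set {set T}}) :
  simple_graph G -> G x y ->
  (deg G x <= 2)%N -> (deg G y <= 2)%N ->
  two_matching G A -> two_matching G ([set x; y] |: A).
Proof.
rewrite /two_matching; move=> [sym irr] Gxy dx dy /andP[sA /forallP cA].
have eE : [set x; y] \in edges G.
  by rewrite inE; apply/existsP; exists x; apply/existsP; exists y; rewrite Gxy eqxx.
have sA' : [set x; y] |: A \subset edges G.
  by apply/fintype.subsetP => f; rewrite in_setU1 => /orP[/eqP -> //|/(fintype.subsetP sA)].
apply/andP; split => //; apply/forallP => v.
case: (boolP (v \in [set x; y])) => vin.
  move: vin; rewrite !inE => /orP[/eqP ->|/eqP ->].
    exact: leq_trans (card_inc x sym sA') dx.
  exact: leq_trans (card_inc y sym sA') dy.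
apply: leq_trans (cA v); apply: subset_leq_card; apply/fintype.subsetP => f.
rewrite !inE => /andP[/orP[/eqP fe|fA] vf].
  by move: vin; rewrite -fe vf.
by rewrite fA vf.
Qed.

Theorem mainTheorem6 (R : realType) (T : finType) (G : rel T) (x y : T) :
  simple_graph G -> G x y ->
  (deg G x <= 2)%N -> (deg G y <= 2)%N ->
  complex_contractible R (M2 G).
Proof.
move=> sG Gxy dx dy.
set e := [set x; y].
have coneM : forall A, M2 G A -> M2 G (e |: A) by move=> A; exact: cone.
have subM : forall A B : {set {set T}}, M2 G A -> B \subset e |: A -> M2 G B.
  by move=> A B MA sB; apply: tm_sub sB; exact: coneM.
pose d : {ptws {set T} -> R} := fun v => if v == e then 1 else 0.
have d_ge0 : forall v, 0 <= d v by move=> v; rewrite /d; case: ifP.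
have d_sum : \sum_(v : {set T}) d v = 1.
  rewrite (bigD1 e) //= big1 ?addr0; first by rewrite /d eqxx.
  by move=> v /negbTE ve; rewrite /d ve.
have d_supp : [set v | d v != 0] \subset e |: finset.set0.
  by apply/fintype.subsetP => v; rewrite !inE /d; case: (v == e) => //=; rewrite eqxx.
exists d; split.
  split => //; split => //; apply: subM d_supp; exact: tm0.
exists (hom d); split.
  apply: continuous_subspaceT; apply: ptws_cont => v; exact: comp_cont.
split.
  move=> [s t] /= /andP[s0 s1] [tge0 [tsum tM]].
  split.
    move=> v; rewrite /hom /=; apply: addr_ge0; apply: mulr_ge0 => //.
    by rewrite subr_ge0.
  split.
    by rewrite /hom /= big_split /= -!mulr_sumr tsum d_sum !mulr1 subrK.
  apply: (subM _ _ tM). apply/fintype.subsetP => v; rewrite !inE /hom /=.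
  case: (eqVneq v e) => [->|ve] //=.
  have -> : d v = 0 by rewrite /d (negbTE ve).
  by rewrite mulr0 addr0; apply: contra => /eqP ->; rewrite mulr0.
move=> t _; split.
  by apply: funext => v; rewrite /hom /= subr0 mul1r mul0r addr0.
by apply: funext => v; rewrite /hom /= subrr mul0r mul1r add0r.
Qed.
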